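(* Let $\delta>0$, $\rho>0$ and $\eta_c>0$, and let $g(A,\eta)=\delta(\eta-\eta_c)$ and $h(A,\eta)=\rho\left(112.88+56.91\eta-24.31\eta^2-11.05\eta^3-\frac{A}{1.5}\right)$. Consider the piecewise vector field $$\dot A=g(A,\eta),\qquad \dot\eta=\begin{cases} -|h| & \eta>1,\\ \tfrac{h-|h|}{2} & \eta=1,\\ h & 0<\eta<1,\\ \tfrac{h+|h|}{2} & \eta=0,\\ |h| & \eta<0. \end{cases}$$ Then any (forward-unique) Filippov solution $(A(t),\eta(t))$ of this system that reaches the boundary $\eta=0$, say $\eta(t_0)=0$, leaves it in finite time: there exists $t_1>t_0$ with $\eta(t_1)>0$.
   Context: Filippov solutions: for a locally essentially bounded vector field $F$ on $\mathbb{R}^2$, let $\mathcal{K}[F](z)=\bigcap_{\delta'>0}\bigcap_{\mu(N)=0}\overline{\mathrm{co}}\,F(B_{\delta'}(z)\setminus N)$; a Filippov solution is an absolutely continuous curve $z(t)$ with $\dot z(t)\in\mathcal{K}[F](z(t))$ for almost every $t$. Such solutions exist and are unique in forward time for this system. *)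

(* Defs.v *)
From Stdlib Require Import Reals Lra List.
Import ListNotations.
Open Scope R_scope.

Definition pt := (R * R)%type.

Definition null1 (N : R -> Prop) : Prop :=
  forall eps, 0 < eps ->
    exists a b : nat -> R,
      (forall n, a n <= b n) /\
      (forall t, N t -> exists n, a n < t < b n) /\
      (forall n, sum_f_R0 (fun k => b k - a k) n <= eps).

Definition null2 (N : pt -> Prop) : Prop :=
  forall eps, 0 < eps ->
    exists a b c d : nat -> R,
      (forall n, a n <= b n /\ c n <= d n) /\
      (forall z, N z -> exists n, a n < fst z < b n /\ c n < snd z < d n) /\
      (forall n, sum_f_R0 (fun k => (b k - a k) * (d k - c k)) n <= eps).

Definition dist2 (z w : pt) : R :=
  sqrt ((fst z - fst w)^2 + (snd z - snd w)^2).

Definition conv_hull (S : pt -> Prop) (v : pt) : Prop :=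
  exists l : list (R * pt),
    (forall c, In c l -> 0 <= fst c /\ S (snd c)) /\
    fold_right (fun c s => fst c + s) 0 l = 1 /\
    fst v = fold_right (fun c s => fst c * fst (snd c) + s) 0 l /\
    snd v = fold_right (fun c s => fst c * snd (snd c) + s) 0 l.

Definition closure2 (S : pt -> Prop) (v : pt) : Prop :=
  forall eps, 0 < eps -> exists w, S w /\ dist2 v w < eps.

Definition img_ball_minus (F : pt -> pt) (z : pt) (dlt : R) (N : pt -> Prop)
  (v : pt) : Prop :=
  exists y, dist2 y z < dlt /\ ~ N y /\ v = F y.

Definition Filippov_K (F : pt -> pt) (z : pt) (v : pt) : Prop :=
  forall dlt, 0 < dlt -> forall N, null2 N ->
    closure2 (conv_hull (img_ball_minus F z dlt N)) v.

Fixpoint nonoverlap (lo : R) (l : list (R * R)) : Prop :=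
  match l with
  | [] => True
  | (x, y) :: l' => lo <= x <= y /\ nonoverlap y l'
  end.

Definition abs_cont_on (f : R -> R) (a b : R) : Prop :=
  forall eps, 0 < eps -> exists d, 0 < d /\
    forall l : list (R * R),
      nonoverlap a l -> (forall p, In p l -> snd p <= b) ->
      fold_right (fun p s => (snd p - fst p) + s) 0 l < d ->
      fold_right (fun p s => Rabs (f (snd p) - f (fst p)) + s) 0 l < eps.

Definition Filippov_solution (F : pt -> pt) (z : R -> pt) (a : R) : Prop :=
  (forall b, a <= b ->
     abs_cont_on (fun t => fst (z t)) a b /\
     abs_cont_on (fun t => snd (z t)) a b) /\
  exists Nt : R -> Prop, null1 Nt /\
    forall t, a < t -> ~ Nt t ->
      exists v1 v2,
        derivable_pt_lim (fun s => fst (z s)) t v1 /\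
        derivable_pt_lim (fun s => snd (z s)) t v2 /\
        Filippov_K F (z t) (v1, v2).

Definition g_fun (dlt eta_c : R) (A eta : R) : R := dlt * (eta - eta_c).

Definition h_fun (rho : R) (A eta : R) : R :=
  rho * (11288/100 + (5691/100) * eta - (2431/100) * eta^2
         - (1105/100) * eta^3 - A / (3/2)).

Definition eta_dot (rho : R) (A eta : R) : R :=
  let h := h_fun rho A eta in
  if Rlt_dec 1 eta then - Rabs h
  else if Req_EM_T eta 1 then (h - Rabs h) / 2
  else if Rlt_dec 0 eta then h
  else if Req_EM_T eta 0 then (h + Rabs h) / 2
  else Rabs h.

Definition field (dlt rho eta_c : R) (z : pt) : pt :=
  (g_fun dlt eta_c (fst z) (snd z), eta_dot rho (fst z) (snd z)).

(* Main.v *)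
Require Import Defs.
From Stdlib Require Import Reals Lra List Classical Arith Lia.
Import ListNotations.
Open Scope R_scope.

Fixpoint psum (u : nat -> R) (M : nat) : R :=
  match M with O => 0 | S k => psum u k + u k end.

Lemma psum_sum u M : psum u (S M) = sum_f_R0 u M.
Proof. induction M; simpl in *; [lra|]. rewrite <- IHM. simpl. lra. Qed.

Definition fsum (u : nat -> R) (l : list nat) : R :=
  fold_right (fun n s => u n + s) 0 l.

Lemma remove_notin (M : nat) l : ~ In M l -> remove Nat.eq_dec M l = l.
Proof.
  induction l as [|x l IH]; simpl; auto. intros H.
  destruct (Nat.eq_dec M x); [exfalso; auto|]. f_equal; auto.
Qed.

Lemma nodup_rem M l : NoDup l -> NoDup (remove Nat.eq_dec M l).
Proof.
  induction l as [|x l IH]; simpl; intros H; auto. inversion H; subst.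
  destruct (Nat.eq_dec M x); auto. constructor; auto.
  intro Hin. apply in_remove in Hin. tauto.
Qed.

Lemma fsum_rem u M l : NoDup l -> In M l ->
  fsum u l = u M + fsum u (remove Nat.eq_dec M l).
Proof.
  induction l as [|x l IH]; intros H Hin. destruct Hin.
  inversion H; subst. destruct (Nat.eq_dec M x).
  - subst. simpl. destruct (Nat.eq_dec x x); [|congruence].
    rewrite remove_notin; auto.
  - simpl. destruct (Nat.eq_dec M x); [congruence|]. simpl.
    destruct Hin as [Hin|Hin]; [congruence|].
    unfold fsum in *; simpl in *. rewrite IH; auto. lra.
Qed.

Lemma fsum_bound u (Hu : forall n, 0 <= u n) M : forall l, NoDup l ->
  (forall n, In n l -> (n < M)%nat) -> fsum u l <= psum u M.
Proof.
  induction M; intros l Hnd Hl.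
  - destruct l as [|x l]. unfold fsum; simpl; lra.
    specialize (Hl x (or_introl eq_refl)). lia.
  - assert (fsum u (remove Nat.eq_dec M l) <= psum u M).
    { apply IHM. apply nodup_rem; auto. intros n Hn.
      apply in_remove in Hn. destruct Hn as [Hn Hne]. specialize (Hl n Hn). lia. }
    simpl. destruct (in_dec Nat.eq_dec M l).
    + rewrite (fsum_rem u M l Hnd i). specialize (Hu M); lra.
    + rewrite remove_notin in H; auto. specialize (Hu M); lra.
Qed.

Lemma fsum_exists u (Hu : forall n, 0 <= u n) l : NoDup l ->
  exists M, fsum u l <= sum_f_R0 u M.
Proof.
  intros Hnd. exists (fold_right Nat.max 0%nat l).
  rewrite <- psum_sum. apply fsum_bound; auto.
  intros n Hn. enough (n <= fold_right Nat.max 0 l)%nat by lia.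
  clear Hnd. induction l; simpl in *. tauto. destruct Hn as [Hn|Hn]; [subst; lia| specialize (IHl Hn); lia].
Qed.

Definition FS (T : R * R -> R) (l : list (R * R)) : R :=
  fold_right (fun p s => T p + s) 0 l.

Lemma FS_app T l1 l2 : FS T (l1 ++ l2) = FS T l1 + FS T l2.
Proof. induction l1; unfold FS in *; simpl; [lra|]. rewrite IHl1. lra. Qed.

Lemma FS_plus T1 T2 l : FS (fun p => T1 p + T2 p) l = FS T1 l + FS T2 l.
Proof. induction l; unfold FS in *; simpl; [lra|]. rewrite IHl. lra. Qed.

Lemma FS_scal k T l : FS (fun p => k * T p) l = k * FS T l.
Proof. induction l; unfold FS in *; simpl; [lra|]. rewrite IHl. lra. Qed.

Lemma nonoverlap_app lo l x y : nonoverlap lo l -> lo <= x ->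
  (forall p, In p l -> snd p <= x) -> x <= y -> nonoverlap lo (l ++ [(x, y)]).
Proof.
  revert lo. induction l as [|[x0 y0] l IH]; intros lo Hn Hlo Hend Hxy; simpl in *.
  - tauto.
  - destruct Hn as [H1 H2]. split; auto. apply IH; auto.
    specialize (Hend (x0, y0) (or_introl eq_refl)); simpl in Hend; lra.
Qed.

Lemma nonoverlap_mono lo' lo l : lo' <= lo -> nonoverlap lo l -> nonoverlap lo' l.
Proof. destruct l as [|[x y] l]; simpl; auto. intros H [H1 H2]; split; [lra|auto]. Qed.

Lemma FS_len_bound (a b : nat -> R) (d : R) (l : list ((R * R) * nat)) :
  (forall s e n, In ((s, e), n) l -> a n < s /\ e = Rmin (b n) d) ->
  FS (fun p => snd p - fst p) (map fst l) <= fsum (fun n => b n - a n) (map snd l).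
Proof.
  induction l as [|[[s e] n] l IH]; intros Hj; unfold FS, fsum in *; simpl in *; [lra|].
  destruct (Hj s e n (or_introl eq_refl)) as [H1 H2].
  assert (e <= b n) by (subst; apply Rmin_l).
  assert (fold_right (fun p s0 => snd p - fst p + s0) 0 (map fst l) <=
     fold_right (fun n0 s0 => b n0 - a n0 + s0) 0 (map snd l)) by (apply IH; auto).
  lra.
Qed.

Lemma mono (f : R -> R) (m c d lo : R) (N : R -> Prop) :
  lo <= c -> c <= d -> abs_cont_on f lo d -> null1 N ->
  (forall t, c <= t <= d -> ~ N t -> exists v, derivable_pt_lim f t v /\ m <= v) ->
  m * (d - c) <= f d - f c.
Proof.
  intros Hlo Hcd Hac Hnull Hder.
  assert (Key: forall eps, 0 < eps -> f d - f c >= m*(d-c) - eps*(d - c + 1 + Rabs m)).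
  { intros eps Heps.
    destruct (Hac eps Heps) as [del [Hdel Hd]].
    set (eta := Rmin del eps / 2).
    assert (0 < Rmin del eps) by (apply Rmin_glb_lt; lra).
    assert (Heta: 0 < eta) by (unfold eta; lra).
    assert (Heta1 : eta < del) by (unfold eta; pose proof (Rmin_l del eps); lra).
    assert (Heta2 : eta <= eps) by (unfold eta; pose proof (Rmin_r del eps); lra).
    destruct (Hnull eta Heta) as [a [b [Hab [Hcov Hsum]]]].
    set (g := fun x => f x + (eps - m) * x).
    set (T := fun p : R * R => Rabs (f (snd p) - f (fst p)) + Rabs m * (snd p - fst p)).
    set (Q := fun x => c <= x <= d /\ exists l : list ((R*R)*nat),
        (forall s e n, In ((s,e),n) l -> a n < s /\ e = Rmin (b n) d) /\
        nonoverlap c (map fst l) /\ (forall p, In p (map fst l) -> snd p <= x) /\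
        NoDup (map snd l) /\
        g x >= g c - FS T (map fst l)).
    assert (Qc: Q c).
    { split; [lra|]. exists nil. simpl. repeat split; auto; try tauto.
      constructor. unfold FS; simpl; lra. }
    assert (Hb: bound Q) by (exists d; intros x [Hx _]; lra).
    destruct (completeness Q Hb (ex_intro _ c Qc)) as [xs [Hub Hlub]].
    assert (Hxs: c <= xs <= d).
    { split. apply Hub; auto. apply Hlub. intros x [Hx _]; lra. }
    assert (Happ: forall y, y < xs -> exists x, Q x /\ y < x <= xs).
    { intros y Hy. apply NNPP; intro Hn.
      assert (xs <= y); [|lra]. apply Hlub. intros x Qx.
      destruct (Rle_dec x y) as [|Hxy]; auto. exfalso; apply Hn. exists x.
      split; auto. split; [lra|]. apply Hub; auto. }
    assert (Qd: Q d).
    { destruct (classic (N xs)) as [HN|HN].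
      - destruct (Hcov xs HN) as [n Hn].
        destruct (Happ (a n) (proj1 Hn)) as [x [Qx Hx]].
        destruct (Req_dec x d) as [Hxd|Hxd]; [subst x; exact Qx|].
        destruct Qx as [Hxcd [l [Hj [Hno [Hend [Hnd Hval]]]]]].
        set (e := Rmin (b n) d).
        assert (Hxe: x < e) by (apply Rmin_glb_lt; lra).
        assert (Hed : e <= d) by apply Rmin_r.
        assert (Qe: Q e).
        { split; [lra|].
          exists (l ++ [((x,e),n)]). split; [|split; [|split; [|split]]].
          - intros s e' n' Hin. apply in_app_or in Hin. destruct Hin as [Hin|Hin];
              [apply Hj; auto|]. simpl in Hin. destruct Hin as [Hin|[]].
            inversion Hin; subst. split; auto; lra.
          - rewrite map_app. apply nonoverlap_app; auto; lra.
          - intros p Hp. rewrite map_app in Hp. apply in_app_or in Hp.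
            destruct Hp as [Hp|Hp]; [specialize (Hend p Hp); lra|].
            simpl in Hp. destruct Hp as [<-|[]]. simpl; lra.
          - rewrite map_app. apply NoDup_app; auto. constructor; [intros []|constructor].
            intros k Hk Hk2. simpl in Hk2. destruct Hk2 as [<-|[]].
            apply in_map_iff in Hk. destruct Hk as [[[s' e'] n'] [Heq Hin]].
            simpl in Heq; subst n'. destruct (Hj _ _ _ Hin) as [_ He'].
            assert (Hex : e' <= x).
            { apply (Hend (s', e')). apply in_map_iff. exists ((s', e'), n). auto. }
            subst e'. fold e in Hex. lra.
          - rewrite map_app, FS_app. unfold FS at 2. simpl. unfold T in *. simpl.
            unfold g in *.
            pose proof (Rle_abs m) as Hm1. pose proof (Rle_abs (- (f e - f x))) as Hm2.
            rewrite Rabs_Ropp in Hm2.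
            assert ((eps - m) * e - (eps - m) * x >= - Rabs m * (e - x)) by nra.
            lra. }
        specialize (Hub e Qe).
        assert (He : e = d).
        { unfold e in *. destruct (Rle_dec (b n) d).
          - rewrite Rmin_left in Hub; auto. lra.
          - rewrite Rmin_right; auto; lra. }
        rewrite <- He; exact Qe.
      - destruct (Hder xs Hxs HN) as [v [Hv Hmv]].
        destruct (Hv (eps/2)) as [r Hr]; [lra|].
        pose proof (cond_pos r) as Hr0.
        assert (Qxs: Q xs).
        { destruct (Happ (xs - r)) as [x [Qx Hx]]; [lra|].
          destruct (Req_dec x xs) as [Hxe|Hne]; [subst x; auto|].
          destruct Qx as [Hxcd [l [Hj [Hno [Hend [Hnd Hval]]]]]].
          split; auto. exists l. split; [auto|split; [auto|split; [|split; [auto|]]]].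
          + intros p Hp; specialize (Hend p Hp); lra.
          + specialize (Hr (x - xs)). replace (xs + (x - xs)) with x in Hr by ring.
            assert (Hq: Rabs ((f x - f xs) / (x - xs) - v) < eps / 2)
              by (apply Hr; [lra| rewrite Rabs_left; lra]).
            set (q := (f x - f xs) / (x - xs)) in *.
            assert (Hfq : f x - f xs = q * (x - xs)) by (unfold q; field; lra).
            apply Rabs_def2 in Hq. unfold g in *.
            assert ((q + eps - m) * (x - xs) < 0) by nra.
            lra. }
        destruct (Req_dec xs d) as [Hxd|Hne]; [rewrite <- Hxd; auto|].
        exfalso.
        set (x' := Rmin (xs + r/2) d).
        assert (Hx1 : xs < x') by (apply Rmin_glb_lt; lra).
        assert (Hx2 : x' <= xs + r/2) by apply Rmin_l.
        assert (Hx3 : x' <= d) by apply Rmin_r.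
        assert (Qx' : Q x').
        { destruct Qxs as [Hxcd [l [Hj [Hno [Hend [Hnd Hval]]]]]].
          split; [lra|]. exists l. split; [auto|split; [auto|split; [|split; [auto|]]]].
          + intros p Hp; specialize (Hend p Hp); lra.
          + specialize (Hr (x' - xs)). replace (xs + (x' - xs)) with x' in Hr by ring.
            assert (Hq: Rabs ((f x' - f xs) / (x' - xs) - v) < eps / 2)
              by (apply Hr; [lra| rewrite Rabs_right; lra]).
            set (q := (f x' - f xs) / (x' - xs)) in *.
            assert (Hfq : f x' - f xs = q * (x' - xs)) by (unfold q; field; lra).
            apply Rabs_def2 in Hq. unfold g in *.
            assert ((q + eps - m) * (x' - xs) > 0) by nra.
            lra. }
        specialize (Hub x' Qx'). lra. }
    destruct Qd as [_ [l [Hj [Hno [Hend [Hnd Hval]]]]]].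
    pose proof (FS_len_bound a b d l Hj) as Hlen.
    destruct (fsum_exists (fun n => b n - a n)) with (l := map snd l) as [M HM]; auto.
    { intros n; specialize (Hab n); lra. }
    specialize (Hsum M).
    assert (Hac1 : FS (fun p => Rabs (f (snd p) - f (fst p))) (map fst l) < eps).
    { apply Hd. eapply nonoverlap_mono; eauto. auto. unfold FS in Hlen. lra. }
    unfold T in Hval. rewrite FS_plus, FS_scal in Hval. unfold g in Hval.
    assert (FS (fun p => snd p - fst p) (map fst l) <= eps) by lra.
    assert (Rabs m * FS (fun p => snd p - fst p) (map fst l) <= Rabs m * eps)
      by (apply Rmult_le_compat_l; auto; apply Rabs_pos).
    nra. }
  apply Rnot_lt_le. intro Hlt.
  set (K := d - c + 1 + Rabs m).
  assert (HK : 0 < K) by (unfold K; pose proof (Rabs_pos m); lra).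
  set (eps := (m * (d - c) - (f d - f c)) / (2 * K)).
  assert (He : 0 < eps) by (unfold eps; apply Rdiv_lt_0_compat; lra).
  specialize (Key eps He). fold K in Key.
  assert (eps * K = (m * (d - c) - (f d - f c)) / 2) by (unfold eps; field; lra).
  lra.
Qed.

Lemma sum_zero n : sum_f_R0 (fun _ : nat => (0 - 0) * (0 - 0)) n = 0.
Proof. induction n; simpl; [ring|]. rewrite IHn; ring. Qed.

Lemma null2_empty : null2 (fun _ => False).
Proof.
  intros eps Heps. exists (fun _ => 0), (fun _ => 0), (fun _ => 0), (fun _ => 0).
  split; [intros; lra|]. split; [intros z []|]. intros n.
  rewrite sum_zero; lra.
Qed.

Lemma abs_fst_dist y z : Rabs (fst y - fst z) <= dist2 y z.
Proof.
  unfold dist2. rewrite <- (sqrt_pow2 (Rabs _)) by apply Rabs_pos.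
  apply sqrt_le_1_alt. rewrite pow2_abs. pose proof (pow2_ge_0 (snd y - snd z)). lra.
Qed.

Lemma abs_snd_dist y z : Rabs (snd y - snd z) <= dist2 y z.
Proof.
  unfold dist2. rewrite <- (sqrt_pow2 (Rabs _)) by apply Rabs_pos.
  apply sqrt_le_1_alt. rewrite pow2_abs. pose proof (pow2_ge_0 (fst y - fst z)). lra.
Qed.

Lemma hull_lin S v al be L : conv_hull S v ->
  (forall p, S p -> al * fst p + be * snd p >= L) -> al * fst v + be * snd v >= L.
Proof.
  intros [l [Hl [Hw [H1 H2]]]] HS. rewrite H1, H2.
  assert (Hgen : al * fold_right (fun c s => fst c * fst (snd c) + s) 0 l +
     be * fold_right (fun c s => fst c * snd (snd c) + s) 0 l >=
     L * fold_right (fun c s => fst c + s) 0 l).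
  { clear Hw H1 H2. induction l as [|[w p] l IH]; simpl; [lra|].
    destruct (Hl (w, p) (or_introl eq_refl)) as [Hw0 Hp]. simpl in *.
    specialize (HS p Hp).
    assert (IH' : al * fold_right (fun c s => fst c * fst (snd c) + s) 0 l +
     be * fold_right (fun c s => fst c * snd (snd c) + s) 0 l >=
     L * fold_right (fun c s => fst c + s) 0 l) by (apply IH; intros; apply Hl; auto).
    assert (w * (al * fst p + be * snd p) >= w * L).
    { apply Rle_ge. apply Rmult_le_compat_l; lra. }
    nra. }
  rewrite Hw in Hgen. lra.
Qed.

Lemma K_lin F z v al be L r : 0 < r -> Filippov_K F z v ->
  (forall y, dist2 y z < r -> al * fst (F y) + be * snd (F y) >= L) ->
  al * fst v + be * snd v >= L.
Proof.
  intros Hr HK Hy. apply Rnot_lt_ge. intro Hlt.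
  set (K := Rabs al + Rabs be + 1).
  assert (HK0 : 0 < K) by (unfold K; pose proof (Rabs_pos al); pose proof (Rabs_pos be); lra).
  set (eps := (L - (al * fst v + be * snd v)) / (2 * K)).
  assert (He : 0 < eps) by (unfold eps; apply Rdiv_lt_0_compat; lra).
  destruct (HK r Hr (fun _ => False) null2_empty eps He) as [w [Hw Hd]].
  assert (Hw' : al * fst w + be * snd w >= L).
  { apply (hull_lin _ _ _ _ _ Hw). intros p [y [Hyd [_ ->]]]. apply Hy; auto. }
  pose proof (abs_fst_dist v w) as D1. pose proof (abs_snd_dist v w) as D2.
  pose proof (Rle_abs (- (al * (fst v - fst w)))) as A1.
  pose proof (Rle_abs (- (be * (snd v - snd w)))) as A2.
  rewrite Rabs_Ropp, Rabs_mult in A1, A2.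
  assert (Rabs al * Rabs (fst v - fst w) <= Rabs al * eps)
    by (apply Rmult_le_compat_l; [apply Rabs_pos|lra]).
  assert (Rabs be * Rabs (snd v - snd w) <= Rabs be * eps)
    by (apply Rmult_le_compat_l; [apply Rabs_pos|lra]).
  assert (eps * K = (L - (al * fst v + be * snd v)) / 2) by (unfold eps; field; lra).
  unfold K in *. nra.
Qed.

Lemma K_fst dl rho ec z v : 0 < dl -> Filippov_K (field dl rho ec) z v ->
  fst v = dl * (snd z - ec).
Proof.
  intros Hdl HK.
  assert (Hb : forall r, 0 < r -> dl * (snd z - ec) - dl * r <= fst v <= dl * (snd z - ec) + dl * r).
  { intros r Hr. split.
    - pose proof (K_lin _ z v 1 0 (dl * (snd z - ec) - dl * r) r Hr HK) as H.
      assert (1 * fst v + 0 * snd v >= dl * (snd z - ec) - dl * r); [|lra].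
      apply H. intros y Hy. simpl. unfold g_fun.
      pose proof (abs_snd_dist y z). pose proof (Rle_abs (snd z - snd y)).
      rewrite Rabs_minus_sym in H1. nra.
    - pose proof (K_lin _ z v (-1) 0 (- (dl * (snd z - ec) + dl * r)) r Hr HK) as H.
      assert (-1 * fst v + 0 * snd v >= - (dl * (snd z - ec) + dl * r)); [|lra].
      apply H. intros y Hy. simpl. unfold g_fun.
      pose proof (abs_snd_dist y z). pose proof (Rle_abs (snd y - snd z)). nra. }
  destruct (Rtotal_order (fst v) (dl * (snd z - ec))) as [Hl|[He|Hg]]; auto.
  - set (r := (dl * (snd z - ec) - fst v) / (2 * dl)).
    assert (0 < r) by (unfold r; apply Rdiv_lt_0_compat; lra).
    specialize (Hb r H). assert (dl * r = (dl * (snd z - ec) - fst v) / 2) by (unfold r; field; lra).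
    lra.
  - set (r := (fst v - dl * (snd z - ec)) / (2 * dl)).
    assert (0 < r) by (unfold r; apply Rdiv_lt_0_compat; lra).
    specialize (Hb r H). assert (dl * r = (fst v - dl * (snd z - ec)) / 2) by (unfold r; field; lra).
    lra.
Qed.

Lemma eta_dot_neg rho A e : e < 0 -> eta_dot rho A e = Rabs (h_fun rho A e).
Proof.
  intros He. unfold eta_dot.
  destruct (Rlt_dec 1 e); [lra|]. destruct (Req_EM_T e 1); [lra|].
  destruct (Rlt_dec 0 e); [lra|]. destruct (Req_EM_T e 0); [lra|]. auto.
Qed.

Lemma eta_dot_hpos rho A e : -1 < e < 1 -> 0 < h_fun rho A e -> eta_dot rho A e = h_fun rho A e.
Proof.
  intros He Hh. unfold eta_dot.
  destruct (Rlt_dec 1 e); [lra|]. destruct (Req_EM_T e 1); [lra|].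
  destruct (Rlt_dec 0 e); auto. rewrite Rabs_right by lra.
  destruct (Req_EM_T e 0); lra.
Qed.

Lemma h_pos rho A e : 0 < rho -> A < 1 -> -1 < e < 1 -> h_fun rho A e >= 19 * rho.
Proof.
  intros Hr HA He. unfold h_fun.
  assert (H2 : 0 <= e ^ 2 < 1) by (split; nra).
  assert (H3 : -1 < e ^ 3 < 1) by (split; nra).
  assert (A / (3/2) = 2 * A / 3) by field.
  assert (11288/100 + (5691/100) * e - (2431/100) * e^2 - (1105/100) * e^3 - A / (3/2) >= 19) by lra.
  nra.
Qed.

Lemma deriv_locmax f t v r : derivable_pt_lim f t v -> 0 < r ->
  (forall h, Rabs h < r -> f (t + h) <= f t) -> v = 0.
Proof.
  intros Hv Hr Hm.
  destruct (Rtotal_order v 0) as [Hl|[He|Hg]]; auto; exfalso.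
  - destruct (Hv (- v)) as [dd Hdd]; [lra|]. pose proof (cond_pos dd).
    set (h := - Rmin dd r / 2).
    assert (0 < Rmin dd r) by (apply Rmin_glb_lt; lra).
    assert (Rmin dd r <= dd) by apply Rmin_l. assert (Rmin dd r <= r) by apply Rmin_r.
    assert (Habs : Rabs h = Rmin dd r / 2) by (unfold h; rewrite Rabs_left; lra).
    specialize (Hdd h). specialize (Hm h).
    assert (Hq : Rabs ((f (t + h) - f t) / h - v) < - v) by (apply Hdd; [unfold h; intro; lra | rewrite Habs; lra]).
    assert (f (t + h) <= f t) by (apply Hm; rewrite Habs; lra).
    set (q := (f (t + h) - f t) / h) in *.
    assert (f (t + h) - f t = q * h) by (unfold q; field; unfold h; lra).
    apply Rabs_def2 in Hq. assert (h < 0) by (unfold h; lra). nra.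
  - destruct (Hv v) as [dd Hdd]; [lra|]. pose proof (cond_pos dd).
    set (h := Rmin dd r / 2).
    assert (0 < Rmin dd r) by (apply Rmin_glb_lt; lra).
    assert (Rmin dd r <= dd) by apply Rmin_l. assert (Rmin dd r <= r) by apply Rmin_r.
    assert (Habs : Rabs h = Rmin dd r / 2) by (unfold h; rewrite Rabs_right; lra).
    specialize (Hdd h). specialize (Hm h).
    assert (Hq : Rabs ((f (t + h) - f t) / h - v) < v) by (apply Hdd; [unfold h; intro; lra | rewrite Habs; lra]).
    assert (f (t + h) <= f t) by (apply Hm; rewrite Habs; lra).
    set (q := (f (t + h) - f t) / h) in *.
    assert (f (t + h) - f t = q * h) by (unfold q; field; unfold h; lra).
    apply Rabs_def2 in Hq. assert (0 < h) by (unfold h; lra). nra.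
Qed.

Lemma ac_opp f a b : abs_cont_on f a b -> abs_cont_on (fun t => - f t) a b.
Proof.
  intros H eps He. destruct (H eps He) as [d [Hd Hl]]. exists d; split; auto.
  intros l H1 H2 H3.
  replace (fold_right (fun p s => Rabs (- f (snd p) - - f (fst p)) + s) 0 l)
    with (fold_right (fun p s => Rabs (f (snd p) - f (fst p)) + s) 0 l); auto.
  clear. induction l as [|pp l IHl]; simpl; auto. rewrite IHl.
  replace (- f (snd pp) - - f (fst pp)) with (- (f (snd pp) - f (fst pp))) by ring.
  rewrite Rabs_Ropp; auto.
Qed.

Lemma ac_const a b : abs_cont_on (fun _ => 0) a b.
Proof.
  intros eps He. exists 1; split; [lra|]. intros l _ _ _.
  replace (fold_right (fun p s => Rabs (0 - 0) + s) 0 l) with 0; auto.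
  induction l; simpl; auto. rewrite <- IHl. rewrite Rminus_0_r, Rabs_R0. ring.
Qed.

Lemma exists_nonnull N p q : null1 N -> p < q -> exists t, p < t < q /\ ~ N t.
Proof.
  intros Hn Hpq. apply NNPP; intro Hno.
  set (c := (2 * p + q) / 3). set (d := (p + 2 * q) / 3).
  assert (H := mono (fun _ => 0) 1 c d c N (Rle_refl _) ltac:(unfold c, d; lra)
    (ac_const c d) Hn).
  assert (1 * (d - c) <= 0 - 0); [|unfold c, d in *; lra].
  apply H. intros t Ht HNt. exfalso. apply Hno. exists t. split; auto.
  unfold c, d in Ht; lra.
Qed.

Theorem theorem3p3 (dlt rho eta_c : R) (z : R -> R * R) (a t0 : R) :
  0 < dlt -> 0 < rho -> 0 < eta_c ->
  Filippov_solution (field dlt rho eta_c) z a ->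
  a <= t0 ->
  snd (z t0) = 0 ->
  exists t1, t0 < t1 /\ 0 < snd (z t1).
Proof.
  intros Hdl Hrho Hec [Hac [Nt [Hnull Hder]]] Hat0 Hz0.
  apply NNPP; intro Hno.
  assert (Hle : forall t, t0 < t -> snd (z t) <= 0).
  { intros t Ht. apply Rnot_lt_le. intro; apply Hno; eauto. }
  assert (Hd1 : forall t, t0 < t -> ~ Nt t ->
    exists v, derivable_pt_lim (fun s => snd (z s)) t v /\ 0 <= v).
  { intros t Ht HN. destruct (Hder t ltac:(lra) HN) as [v1 [v2 [_ [Hv2 HK]]]].
    exists v2; split; auto.
    destruct (Req_dec (snd (z t)) 0) as [H0|H0].
    - assert (v2 = 0); [|lra].
      apply (deriv_locmax _ t v2 (t - t0) Hv2); [lra|].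
      intros h Hh. rewrite H0. apply Hle. apply Rabs_def2 in Hh. lra.
    - assert (Hneg : snd (z t) < 0) by (specialize (Hle t Ht); lra).
      pose proof (K_lin _ (z t) (v1, v2) 0 1 0 (- snd (z t)) ltac:(lra) HK) as H.
      simpl in H. assert (0 * v1 + 1 * v2 >= 0); [|lra]. apply H.
      intros y Hy. simpl. rewrite eta_dot_neg.
      + pose proof (Rabs_pos (h_fun rho (fst y) (snd y))). lra.
      + pose proof (abs_snd_dist y (z t)). pose proof (Rle_abs (snd y - snd (z t))). lra. }
  assert (Hmono : forall c d, t0 < c -> c <= d -> snd (z c) <= snd (z d)).
  { intros c d Hc Hcd.
    pose proof (mono (fun s => snd (z s)) 0 c d a Nt ltac:(lra) Hcd
      (proj2 (Hac d ltac:(lra))) Hnull) as H.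
    assert (0 * (d - c) <= snd (z d) - snd (z c)); [|lra].
    apply H. intros t Ht HN. apply Hd1; auto; lra. }
  assert (Hzero : forall t, t0 < t -> snd (z t) = 0).
  { intros t Ht. specialize (Hle t Ht) as Hl.
    destruct (Req_dec (snd (z t)) 0) as [|Hne]; auto. exfalso.
    destruct (proj2 (Hac t ltac:(lra)) (- snd (z t)) ltac:(lra)) as [del [Hdel Hdd]].
    set (c := t0 + Rmin del (t - t0) / 2).
    assert (0 < Rmin del (t - t0)) by (apply Rmin_glb_lt; lra).
    assert (Rmin del (t - t0) <= del) by apply Rmin_l.
    assert (Rmin del (t - t0) <= t - t0) by apply Rmin_r.
    specialize (Hdd [(t0, c)]). simpl in Hdd.
    assert (Habs : Rabs (snd (z c) - snd (z t0)) + 0 < - snd (z t)).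
    { apply Hdd.
      - unfold c; repeat split; lra.
      - intros p [<-|[]]. simpl. unfold c; lra.
      - unfold c; lra. }
    rewrite Hz0 in Habs. pose proof (Rle_abs (- (snd (z c) - 0))) as Ha.
    rewrite Rabs_Ropp in Ha.
    pose proof (Hmono c t ltac:(unfold c; lra) ltac:(unfold c; lra)). lra. }
  assert (HA : forall t, t0 < t -> ~ Nt t ->
    exists v, derivable_pt_lim (fun s => - fst (z s)) t v /\ dlt * eta_c <= v).
  { intros t Ht HN. destruct (Hder t ltac:(lra) HN) as [v1 [v2 [Hv1 [_ HK]]]].
    pose proof (K_fst _ _ _ _ _ Hdl HK) as Hf. simpl in Hf.
    rewrite (Hzero t Ht) in Hf.
    exists (- v1). split.
    - exact (derivable_pt_lim_opp _ _ _ Hv1).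
    - lra. }
  assert (HAdec : forall c d, t0 < c -> c <= d ->
    dlt * eta_c * (d - c) <= - fst (z d) - - fst (z c)).
  { intros c d Hc Hcd.
    apply (mono (fun s => - fst (z s)) (dlt * eta_c) c d a Nt ltac:(lra) Hcd
      (ac_opp _ _ _ (proj1 (Hac d ltac:(lra)))) Hnull).
    intros t Ht HN. apply HA; auto; lra. }
  set (c1 := t0 + 1).
  set (k := dlt * eta_c).
  assert (Hk : 0 < k) by (unfold k; nra).
  set (T := c1 + (Rabs (fst (z c1)) + 1) / k).
  assert (HT : c1 < T) by (unfold T; assert (0 < (Rabs (fst (z c1)) + 1) / k)
    by (apply Rdiv_lt_0_compat; pose proof (Rabs_pos (fst (z c1))); lra); lra).
  destruct (exists_nonnull Nt T (T + 1) Hnull ltac:(lra)) as [t [Ht HN]].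
  assert (Ht0 : t0 < t) by (unfold c1 in HT; lra).
  assert (HAt : fst (z t) < 0).
  { pose proof (HAdec c1 t ltac:(unfold c1; lra) ltac:(lra)) as H. fold k in H.
    assert (k * ((Rabs (fst (z c1)) + 1) / k) = Rabs (fst (z c1)) + 1) by (field; lra).
    assert (k * (t - c1) > k * ((Rabs (fst (z c1)) + 1) / k)).
    { apply Rmult_lt_compat_l; auto. unfold T in Ht; lra. }
    pose proof (Rle_abs (fst (z c1))). lra. }
  destruct (Hder t ltac:(lra) HN) as [v1 [v2 [_ [Hv2 HK]]]].
  assert (Hv0 : v2 = 0).
  { apply (deriv_locmax _ t v2 (t - t0) Hv2); [lra|].
    intros h Hh. apply Rabs_def2 in Hh. rewrite (Hzero t), (Hzero (t + h)); lra. }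
  pose proof (K_lin _ (z t) (v1, v2) 0 1 (19 * rho) 1 ltac:(lra) HK) as H.
  simpl in H. assert (0 * v1 + 1 * v2 >= 19 * rho); [|lra]. apply H.
  intros y Hy. simpl.
  pose proof (abs_snd_dist y (z t)) as D2. pose proof (abs_fst_dist y (z t)) as D1.
  rewrite (Hzero t Ht0) in D2. rewrite Rminus_0_r in D2.
  pose proof (Rle_lt_trans _ _ _ D2 Hy) as E2. pose proof (Rle_lt_trans _ _ _ D1 Hy) as E1.
  apply Rabs_def2 in E1. apply Rabs_def2 in E2.
  assert (Hh : h_fun rho (fst y) (snd y) >= 19 * rho) by (apply h_pos; lra).
  rewrite eta_dot_hpos; lra.
Qed.
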